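(* Let $b(\lambda)=\frac14\lambda^4+\frac12p\lambda^2+q\lambda$ with $p<0$, $q\in\mathbb{R}$, let $b^*(\eta)=\sup_{\lambda}[\eta\lambda-b(\lambda)]$, and $A(x,r,\eta)=b(x)+b(r)-\eta(x+r)+2b^*(\eta)$. If $|x|=\sqrt{-p}$, then $A(x,-x,\eta)=(\eta-q)h(\eta)$ for a function $h$ satisfying $|h(\eta)|\approx(1+|\eta|)^{1/3}$ for all $\eta\in\mathbb{R}$.
   Context: $X\approx Y$ means $cY\le X\le c^{-1}Y$ for some $c>0$ independent of $\eta$ (it may depend on $p,q$). *)

(* Defs.v *)
From mathcomp Require Import all_boot all_order all_algebra.
From mathcomp Require Import all_classical all_reals all_analysis.
Set Implicit Arguments. Unset Strict Implicit. Unset Printing Implicit Defensive.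
Import Order.TTheory GRing.Theory Num.Theory.
Local Open Scope ring_scope.
Local Open Scope classical_set_scope.

Definition bfun (R : realType) (p q l : R) : R :=
  l ^+ 4 / 4 + p * l ^+ 2 / 2 + q * l.

Definition bstar (R : realType) (p q eta : R) : R :=
  sup [set y | exists l : R, y = eta * l - bfun p q l].

Definition Afun (R : realType) (p q x r eta : R) : R :=
  bfun p q x + bfun p q r - eta * (x + r) + 2 * bstar p q eta.

(* Main.v *)
Require Import Defs.
From mathcomp Require Import all_boot all_order all_algebra.
From mathcomp Require Import all_classical all_reals all_analysis.
From mathcomp Require Import lra ring.
Set Implicit Arguments. Unset Strict Implicit.
Import Order.TTheory GRing.Theory Num.Theory.
Local Open Scope ring_scope.
Lemma core_up (R : realType) (P s T M L : R) : 0 < s -> s^+2 = P -> 0 <= T ->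
  1 <= M -> M^+3 = 1 + T -> 0 <= L ->
  T*L - (L^+2 - P)^+2/4 <= (2+2*s)*T*M.
Proof.
move=> s0 sP T0 M1 M3 L0.
have sq0 : 0 <= (L^+2 - P)^+2 by rewrite sqr_ge0.
case: (lerP L ((2+2*s)*M)) => hL.
  have : T*L <= T*((2+2*s)*M) by rewrite ler_wpM2l.
  nra.
have hC : (2+2*s)*1 <= (2+2*s)*M by rewrite ler_wpM2l //; lra.
have hC2 : 2*M <= (2+2*s)*M by rewrite ler_wpM2r //; lra.
have L2s : 2*s <= L by lra.
have L2M : 2*M <= L by lra.
have h1 : 3/4 * L^+2 <= L^+2 - P by rewrite -sP; nra.
have h2 : 9/16 * L^+4 <= (L^+2 - P)^+2.
  have h0 : 0 <= 3/4 * L^+2 by nra.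
  have := ler_pM h0 h0 h1 h1. nra.
have h3 : 8 * T <= L^+3.
  have : 8 * M^+3 <= L^+3.
    have -> : 8 * M^+3 = (2*M)^+3 by ring.
    rewrite lerXn2r // ?nnegrE; nra.
  nra.
have : 9/8 * T * L <= 9/64 * L^+4 by nra.
nra.
Qed.

Definition dl (R : realType) (s : R) : R := 1/(4*(s^+2+s+1)).
Definition cl (R : realType) (s : R) : R := Num.min s (dl s / 2).

Lemma core_lo (R : realType) (P s T M : R) : 0 < s -> s^+2 = P -> 0 <= T ->
  1 <= M -> M^+3 = 1 + T ->
  exists L, 0 <= L /\ cl s * T * M <= T*L - (L^+2 - P)^+2/4.
Proof.
move=> s0 sP T0 M1 M3.
set d := dl s.
have e0 : 0 < s^+2+s+1 by nra.
have de : d * (s^+2+s+1) = 1/4 by rewrite /d /dl; field; lra.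
have d0 : 0 < d by rewrite /d /dl; apply: divr_gt0 => //; lra.
have d14 : d <= 1/4 by nra.
have db : s^+2*d + s*d^+2 + d^+3/4 <= 1/2.
  have : d^+2 <= d by nra.
  have : d^+3 <= 1 by nra.
  nra.
have M2 : 1 <= M^+2 by nra.
set u := T / M^+2.
have uM : u * M^+2 = T by rewrite /u divfK //; lra.
have u0 : 0 <= u by rewrite /u divr_ge0 //; nra.
have uT : u <= T by nra.
have uMM : u <= M.
  have : u*M^+2 <= M*M^+2 by rewrite uM; nra.
  by rewrite ler_pM2r //; lra.
have MM : M <= M^+2 by nra.
have u2 : u^+2 <= T.
  have h1 : u*u <= u*M by rewrite ler_wpM2l.
  have h2 : u*M <= u*M^+2 by rewrite ler_wpM2l.
  rewrite expr2; lra.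
have u3 : u^+3 <= T.
  have h1 : u^+2 <= M^+2 by rewrite lerXn2r // nnegrE; lra.
  have h2 : u*u^+2 <= u*M^+2 by rewrite ler_wpM2l.
  have -> : u^+3 = u * u^+2 by ring.
  lra.
have TM : T * M = u + u * T.
  have -> : T*M = u*M^+3 by rewrite -{1}uM -mulrA -exprSr.
  rewrite M3; ring.
exists (s + d*u); split; first nra.
have sq : (((s + d*u)^+2 - P)^+2/4) = s^+2*d^+2*u^+2 + s*d^+3*u^+3 + d^+4*u^+4/4
  by rewrite -sP; field.
rewrite sq.
have b1 : s^+2*d^+2*u^+2 <= s^+2*d^+2*(u*T).
  apply: ler_wpM2l; first nra. nra.
have b2 : s*d^+3*u^+3 <= s*d^+3*(u*T).
  apply: ler_wpM2l; first nra. nra.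
have b3 : d^+4*u^+4 <= d^+4*(u*T).
  apply: ler_wpM2l; first nra. nra.
have b4 : s^+2*d^+2*u^+2 + s*d^+3*u^+3 + d^+4*u^+4/4 <= d/2 * (u*T).
  have : (s^+2*d + s*d^+2 + d^+3/4) * d * (u * T) <= 1/2 * d * (u*T).
    apply: ler_wpM2r; first nra. nra.
  nra.
have c1 : cl s <= s by rewrite /cl ge_min lexx.
have c2 : cl s <= d/2 by rewrite /cl ge_min lexx orbT.
have c0 : 0 <= cl s by rewrite /cl le_min -/d; apply/andP; split; lra.
rewrite -mulrA TM.
have e1 : cl s * u <= s * u by rewrite ler_wpM2r.
have e2 : cl s * (u*T) <= d/2 * (u*T) by rewrite ler_wpM2r //; nra.
have e3 : s * u <= s * T by rewrite ler_wpM2l //; lra.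
have -> : T * (s + d*u) = s*T + d*(u*T) by ring.
have -> : cl s * (u + u*T) = cl s * u + cl s * (u*T) by ring.
have : 0 <= d * (u*T) by apply: mulr_ge0; [exact: ltW | exact: mulr_ge0].
lra.
Qed.

Local Open Scope classical_set_scope.
Lemma M_facts (R : realType) (T : R) : 0 <= T ->
  1 <= (1+T) `^ (3^-1) /\ ((1+T) `^ (3^-1))^+3 = 1 + T.
Proof.
move=> T0.
have M3 : ((1+T) `^ (3^-1))^+3 = 1 + T.
  by rewrite -powR_mulrn ?powR_ge0 // -powRrM mulVf // powRr1 //; lra.
split => //.
have M0 : 0 <= (1+T) `^ (3^-1) by apply: powR_ge0.
case: (lerP 1 ((1+T) `^ (3^-1))) => // hM.
have : ((1+T) `^ (3^-1))^+3 < 1 by rewrite expr_lt1.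
lra.
Qed.

Lemma bstar_bounds (R : realType) (p q eta : R) : p < 0 ->
  cl (Num.sqrt (-p)) * `|eta - q| * (1 + `|eta - q|) `^ (3^-1)
    <= bstar p q eta - p^+2/4 /\
  bstar p q eta - p^+2/4 <=
    (2 + 2 * Num.sqrt (-p)) * `|eta - q| * (1 + `|eta - q|) `^ (3^-1).
Proof.
move=> p0.
set P := -p. set s := Num.sqrt P. set T := `|eta - q|.
set M := (1 + T) `^ (3^-1).
have P0 : 0 < P by rewrite /P; lra.
have s0 : 0 < s by rewrite /s sqrtr_gt0.
have sP : s^+2 = P by rewrite /s sqr_sqrtr //; lra.
have T0 : 0 <= T by apply: normr_ge0.
have [M1 M3] := M_facts T0.
rewrite -/M in M1 M3.
have pP : p^+2 = P^+2 by rewrite /P sqrrN.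
rewrite pP.
have iden : forall l : R, eta* l - bfun p q l = (eta-q)* l - (l^+2 - P)^+2/4 + P^+2/4.
  by move=> l; rewrite /bfun /P; field.
set S := [set y | exists l : R, y = eta * l - bfun p q l].
have ubS : ubound S (P^+2/4 + (2+2*s)*T*M).
  move=> y [l ->]; rewrite iden.
  have h1 : (eta - q) * l <= T * `|l|.
    by rewrite /T -normrM; apply: ler_norm.
  have h2 : l^+2 = `|l|^+2 by rewrite real_normK ?num_real.
  have := core_up (L := `|l|) s0 sP T0 M1 M3 (normr_ge0 l).
  rewrite -h2. lra.
have neS : S !=set0 by exists (eta * 0 - bfun p q 0); exists 0.
have hub : has_ubound S by exists (P^+2/4 + (2+2*s)*T*M).
split; last first.
  have := ge_sup neS ubS. rewrite /bstar -/S. lra.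
have [L [L0 HL]] := core_lo s0 sP T0 M1 M3.
set lam := if 0 <= eta - q then L else - L.
have Slam : S (eta * lam - bfun p q lam) by exists lam.
have := ub_le_sup hub Slam.
rewrite -/(bstar p q eta) iden.
have e1 : (eta - q) * lam = T * L.
  rewrite /lam /T; case: ifP => h.
    by rewrite ger0_norm.
  by rewrite ltr0_norm ?mulrN ?mulNr // ltNge h.
have e2 : lam^+2 = L^+2 by rewrite /lam; case: ifP => _ //; rewrite sqrrN.
rewrite e1 e2. lra.
Qed.

Local Close Scope classical_set_scope.
Theorem proposition6p4 (R : realType) (p q x : R) :
  p < 0 -> `|x| = Num.sqrt (- p) ->
  exists h : R -> R,
    (forall eta : R, Afun p q x (- x) eta = (eta - q) * h eta) /\
    exists c : R, 0 < c /\
      forall eta : R,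
        c * (1 + `|eta|) `^ (3^-1) <= `|h eta| /\
        `|h eta| <= c^-1 * (1 + `|eta|) `^ (3^-1).
Proof.
move=> p0 hx.
set P := -p. set s := Num.sqrt P.
have P0 : 0 < P by rewrite /P; lra.
have s0 : 0 < s by rewrite /s sqrtr_gt0.
have x2 : x^+2 = P by rewrite -real_normK ?num_real // hx sqr_sqrtr //; lra.
have Aeq : forall eta, Afun p q x (- x) eta = 2 * (bstar p q eta - p^+2/4).
  move=> eta.
  have -> : Afun p q x (- x) eta = x^+2 * x^+2 / 2 + p * x^+2 + 2 * bstar p q eta
    by rewrite /Afun /bfun; field.
  by rewrite x2 /P; field.
pose h : R -> R := fun eta : R => if eta == q then 1 else Afun p q x (- x) eta / (eta - q).
set C := 2 + 2 * s. set c := cl s.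
have B := fun eta => @bstar_bounds R p q eta p0.
rewrite -/P -/s -/C -/c in B.
exists h; split.
  move=> eta; rewrite /h; case: eqP => [->|ne].
    have [B1 B2] := B q.
    rewrite subrr normr0 !mulr0 mul0r in B1 B2.
    rewrite Aeq subrr mul0r. lra.
  by rewrite mulrC divfK // subr_eq0; apply/eqP.

have dl0 : 0 < dl s.
  rewrite /dl; apply: divr_gt0; first lra.
  have : 0 < s^+2 + s + 1 by nra.
  lra.
have c0 : 0 < c by rewrite /c /cl lt_min s0 /= divr_gt0.
have C2 : 2 <= C by rewrite /C; lra.
set Q := (1 + `|q|) `^ (3^-1).
have [Q1 _] := M_facts (normr_ge0 q).
rewrite -/Q in Q1.
set k := Num.min (2*c) (1/(2*C)).
have k0 : 0 < k by rewrite /k lt_min; apply/andP; split;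
  [lra | apply: divr_gt0; lra].
have k2c : k <= 2*c by rewrite /k ge_min lexx.
have kC : k <= 1/(2*C) by rewrite /k ge_min lexx orbT.
have kC' : k * (2*C) <= 1.
  by move: kC; rewrite ler_pdivlMr ?mul1r //; lra.
have k1 : k <= 1 by nra.
set iQ := Q^-1.
have iQQ : iQ * Q = 1 by rewrite /iQ mulVf //; lra.
have iQ0 : 0 < iQ by rewrite /iQ invr_gt0; lra.
set ik := k^-1.
have ikk : ik * k = 1 by rewrite /ik mulVf //; lra.
have ik0 : 0 < ik by rewrite /ik invr_gt0.
have Cik : 2*C <= ik.
  have := ler_wpM2l (ltW ik0) kC'. rewrite mulr1 mulrA ikk mul1r. done.
exists (k * iQ); split; first by apply: mulr_gt0.
have inv0 : (k * iQ)^-1 = Q * ik by rewrite invfM /iQ invrK mulrC.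
rewrite inv0.
move=> eta.
set E := (1 + `|eta|) `^ (3^-1).
have [E1 _] := M_facts (normr_ge0 eta). rewrite -/E in E1.
set T := `|eta - q|.
have T0 : 0 <= T by apply: normr_ge0.
set M := (1 + T) `^ (3^-1).
have [M1 _] := M_facts T0. rewrite -/M in M1.
have EQM : E <= Q * M.
  rewrite /E /Q /M -powRM ?addr_ge0 //; apply: ge0_ler_powR; rewrite ?nnegrE.
  - by rewrite invr_ge0.
  - by rewrite addr_ge0.
  - by rewrite mulr_ge0 ?addr_ge0.
  have := ler_normD q (eta - q). rewrite addrC subrK -/T => hh.
  have : 0 <= `|q| * T by rewrite mulr_ge0.
  lra.
have MQE : M <= Q * E.
  rewrite /E /Q /M -powRM ?addr_ge0 //; apply: ge0_ler_powR; rewrite ?nnegrE.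
  - by rewrite invr_ge0.
  - by rewrite addr_ge0.
  - by rewrite mulr_ge0 ?addr_ge0.
  have := ler_normB eta q. rewrite -/T => hh.
  have : 0 <= `|q| * `|eta| by rewrite mulr_ge0.
  lra.
have kiQE : k * iQ * E <= k * M.
  have := ler_wpM2l (ltW (mulr_gt0 k0 iQ0)) EQM.
  have -> : k * iQ * (Q * M) = k * M * (iQ * Q) by ring.
  by rewrite iQQ mulr1.
rewrite /h; case: eqP => [eq|ne].
  have M11 : M = 1 by rewrite /M /T eq subrr normr0 addr0 powR1.
  rewrite normr1; split.
    have : k * M <= 1 by rewrite M11 mulr1.
    lra.
  have Qk : 1 <= Q * ik.
    have : 1 * k <= Q by lra.
    by rewrite -ler_pdivlMr.
  nra.
have Tp : 0 < T by rewrite /T normr_gt0 subr_eq0; apply/eqP.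
have [B1 B2] := B eta. rewrite -/T -/M in B1 B2.
set K := bstar p q eta - p^+2/4 in B1 B2.
have K0 : 0 <= K.
  have : 0 <= c * T * M by rewrite !mulr_ge0 //; lra.
  lra.
rewrite Aeq -/K normf_div (ger0_norm (mulr_ge0 _ K0)) // -/T.
set H := 2 * K / T.
have HT : H * T = 2 * K by rewrite /H divfK //; lra.
have Hlo : 2 * c * M <= H.
  rewrite -(ler_pM2r Tp) HT. lra.
have Hhi : H <= 2 * C * M.
  rewrite -(ler_pM2r Tp) HT. lra.
split.
  have : k * M <= 2 * c * M by rewrite ler_wpM2r //; lra.
  lra.
have h1 : 2 * C * M <= 2 * C * (Q * E) by rewrite ler_wpM2l //; lra.
have h2 : 2 * C * (Q * E) <= ik * (Q * E).
  by rewrite ler_wpM2r // mulr_ge0 //; lra.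
have -> : Q * ik * E = ik * (Q * E) by ring.
lra.
Qed.
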